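(* Let $k\ge 3$ be odd and let $G=(V,E)$ be a $k$-uniform hyperstar of size $d\ge 2$, with $V=[n]$, $E=\{e_1,\ldots,e_d\}$, and heart the vertex $1$. Let $\mathcal L$ be its Laplacian tensor and, for $r=0,1,\ldots,d$, let $f_r(\lambda)=(\lambda-d)(1-\lambda)^{k-1}+r$. Then: (1) A real number $\lambda\neq 1$ is an H-eigenvalue of $\mathcal L$ if and only if it is a real root of $f_r$ for some $r\in\{0,1,\ldots,d\}$. (2) If $\lambda\neq1$ is a real root of $f_r$, then, up to a nonzero constant multiple, the H-eigenvectors of $\mathcal L$ corresponding to $\lambda$ are exactly the vectors $\mathbf x$ obtained as follows: take $x_1=1-\lambda$; choose any $r$ edges of $G$ and set $x_j=1$ for every vertex $j\neq 1$ lying in one of these $r$ edges; set $x_j=0$ for all other vertices $j$.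
   Context: A $k$-uniform hyperstar of size $d$ is a hypergraph whose vertex set is a disjoint union $V=V_0\cup V_1\cup\cdots\cup V_d$ with $|V_0|=1$, $|V_1|=\cdots=|V_d|=k-1$, and edge set $\{V_0\cup V_i: i\in[d]\}$; the vertex in $V_0$ is the heart. For a $k$-uniform hypergraph with $d_i$ the number of edges containing $i$, the Laplacian tensor $\mathcal L=\mathcal D-\mathcal A$ ($\mathcal D$ diagonal with entries $d_i$, $\mathcal A$ with entries $\frac1{(k-1)!}$ at index tuples forming an edge and $0$ otherwise) satisfies $(\mathcal L\mathbf x^{k-1})_i=d_ix_i^{k-1}-\sum_{e\in E,\,i\in e}\prod_{s\in e\setminus\{i\}}x_s$. A real $\lambda$ is an H-eigenvalue of $\mathcal L$ with H-eigenvector $\mathbf x\in\mathbb R^n\setminus\{0\}$ if $(\mathcal L\mathbf x^{k-1})_i=\lambda x_i^{k-1}$ for all $i\in[n]$. *)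

(* Defs.v *)
From HB Require Import structures.
From mathcomp Require Import all_boot all_order all_algebra.
From mathcomp Require Import reals.
Set Implicit Arguments. Unset Strict Implicit. Unset Printing Implicit Defensive.
Import Order.TTheory GRing.Theory Num.Theory.
Local Open Scope ring_scope.

(* E is a k-uniform hyperstar of size d with heart h:
   V = {h} ⊔ V_1 ⊔ ... ⊔ V_d with |V_i| = k-1 and edges {h} ∪ V_i. *)
Definition is_hyperstar (n k d : nat) (E : {set {set 'I_n}}) (h : 'I_n) : Prop :=
  [/\ #|E| = d,
      (forall e, e \in E -> #|e| = k /\ h \in e),
      (forall e1 e2, e1 \in E -> e2 \in E -> e1 != e2 -> e1 :&: e2 = [set h])
    & (forall v : 'I_n, exists2 e, e \in E & v \in e)].

Definition hdeg (n : nat) (E : {set {set 'I_n}}) (i : 'I_n) : nat :=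
  #|[set e in E | i \in e]|.

(* (L x^{k-1})_i = d_i x_i^{k-1} - sum_{e in E, i in e} prod_{s in e \ {i}} x_s *)
Definition lap_apply (R : pzRingType) (n k : nat) (E : {set {set 'I_n}})
  (x : 'I_n -> R) (i : 'I_n) : R :=
  (hdeg E i)%:R * x i ^+ (k.-1)
  - \sum_(e in E | i \in e) \prod_(s in e | s != i) x s.

Definition is_H_eigenpair (R : pzRingType) (n k : nat) (E : {set {set 'I_n}})
  (lam : R) (x : 'I_n -> R) : Prop :=
  (exists i, x i != 0) /\ (forall i, lap_apply k E x i = lam * x i ^+ (k.-1)).

Definition is_H_eigenvalue (R : pzRingType) (n k : nat) (E : {set {set 'I_n}})
  (lam : R) : Prop :=
  exists x : 'I_n -> R, is_H_eigenpair k E lam x.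

Definition fr (R : pzRingType) (k d r : nat) (lam : R) : R :=
  (lam - d%:R) * (1 - lam) ^+ (k.-1) + r%:R.

Definition star_vec (R : pzRingType) (n : nat) (h : 'I_n) (S : {set {set 'I_n}})
  (lam : R) (j : 'I_n) : R :=
  if j == h then 1 - lam
  else if [exists e in S, j \in e] then 1 else 0.

(* Main.v *)
Require Import Defs.
From HB Require Import structures.
From mathcomp Require Import all_boot all_order all_algebra.
From mathcomp Require Import reals.
From mathcomp Require Import ring.
From Stdlib Require Import FunctionalExtensionality.
Import Order.TTheory GRing.Theory Num.Theory.
Local Open Scope ring_scope.
Set Implicit Arguments.


Lemma odd_expr_inj (R : realDomainType) (p : nat) (a b : R) :
  odd p -> a ^+ p = b ^+ p -> a = b.
Proof.
move=> op.
have p0 : (0 < p)%N by case: p op.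
have pos : forall a b : R, 0 <= a -> 0 <= b -> a ^+ p = b ^+ p -> a = b.
  by move=> a' b' a0 b0 e; apply/eqP; rewrite -(eqrXn2 p0 a0 b0) e.
have neg : forall a : R, (- a) ^+ p = - a ^+ p.
  by move=> a'; rewrite exprNn -signr_odd op expr1 mulN1r.
have mix : forall a b : R, 0 <= a -> b < 0 -> a ^+ p = b ^+ p -> False.
  move=> a' b' a0 b0 e.
  have : b' ^+ p < 0 by rewrite exprn_odd_lt0.
  by rewrite -e ltNge exprn_ge0.
move=> e; case: (leP 0 a) => a0; case: (leP 0 b) => b0.
- exact: pos.
- by case: (mix _ _ a0 b0 e).
- by case: (mix _ _ b0 a0 (esym e)).
- apply: oppr_inj; apply: pos; rewrite ?oppr_ge0 ?ltW //.
  by rewrite !neg e.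
Qed.

Lemma edge_uniq n m d (E : {set {set 'I_n}}) (h : 'I_n) :
  is_hyperstar m.+3 d E h -> forall j e1 e2, j != h -> e1 \in E -> e2 \in E ->
  j \in e1 -> j \in e2 -> e1 = e2.
Proof.
case=> _ _ Hi _ j e1 e2 jh E1 E2 j1 j2.
apply/eqP; apply/negPn/negP => ne.
have := Hi _ _ E1 E2 ne; move/setP/(_ j); rewrite !inE j1 j2 /=.
by rewrite (negbTE jh).
Qed.

Lemma sum_nonheart (R : pzRingType) n m d (E : {set {set 'I_n}}) (h : 'I_n) (F : {set 'I_n} -> R) j e :
  is_hyperstar m.+3 d E h -> j != h -> e \in E -> j \in e ->
  \sum_(e' in E | j \in e') F e' = F e.
Proof.
move=> H jh eE je; apply: big_pred1 => e' /=.
case: (eqVneq e' e) => [->|ne]; first by rewrite eE je.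
apply/negbTE/negP => /andP[a b]; by rewrite (edge_uniq H jh a eE b je) eqxx in ne.
Qed.

Lemma hdeg_nonheart n m d (E : {set {set 'I_n}}) (h : 'I_n) j e :
  is_hyperstar m.+3 d E h -> j != h -> e \in E -> j \in e -> hdeg E j = 1%N.
Proof.
move=> H jh eE je; rewrite /hdeg -(cards1 e); apply: eq_card => e'.
rewrite !inE; case: (eqVneq e' e) => [->|ne]; first by rewrite eE je.
apply/negbTE/negP => /andP[a b]; by rewrite (edge_uniq H jh a eE b je) eqxx in ne.
Qed.

Lemma hdeg_heart n m d (E : {set {set 'I_n}}) (h : 'I_n) :
  is_hyperstar m.+3 d E h -> hdeg E h = d.
Proof.
move=> H; case: (H) => cE He _ _; rewrite /hdeg -cE; apply: eq_card => e.
rewrite !inE; case eE: (e \in E) => //=; exact: (He _ eE).2.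
Qed.

Lemma lap_nonheart (R : pzRingType) n m d (E : {set {set 'I_n}}) (h : 'I_n) (x : 'I_n -> R) j e :
  is_hyperstar m.+3 d E h -> j != h -> e \in E -> j \in e ->
  lap_apply m.+3 E x j = x j ^+ m.+2 - \prod_(s in e | s != j) x s.
Proof.
move=> H jh eE je; rewrite /lap_apply (hdeg_nonheart H jh eE je) mul1r.
by rewrite (sum_nonheart _ _ H jh eE je).
Qed.

Lemma lap_heart (R : pzRingType) n m d (E : {set {set 'I_n}}) (h : 'I_n) (x : 'I_n -> R) :
  is_hyperstar m.+3 d E h ->
  lap_apply m.+3 E x h = d%:R * x h ^+ m.+2 - \sum_(e in E) \prod_(s in e :\ h) x s.
Proof.
move=> H; rewrite /lap_apply (hdeg_heart H); congr (_ - _).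
case: (H) => _ He _ _.
rewrite [RHS](eq_bigl (fun e => (e \in E) && (h \in e))); last first.
  by move=> e; case eE: (e \in E) => //=; rewrite (He _ eE).2.
apply: eq_bigr => e _; apply: eq_bigl => s; by rewrite !inE andbC.
Qed.

Lemma prod_split (R : comPzRingType) n (x : 'I_n -> R) (e : {set 'I_n}) j h :
  j \in e -> h \in e -> j != h ->
  \prod_(s in e | s != j) x s = x h * \prod_(s in e :\ j :\ h) x s.
Proof.
move=> je he jh; rewrite (bigD1 h) /=; last by rewrite he eq_sym jh.
congr (_ * _); apply: eq_bigl => s; rewrite !inE.
by case: (s \in e); case: (s == j); case: (s == h).
Qed.

Lemma card_eh n m d (E : {set {set 'I_n}}) (h : 'I_n) e :
  is_hyperstar m.+3 d E h -> e \in E -> #|e :\ h| = m.+2.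
Proof.
move=> H eE; case: (H) => _ He _ _; have [ce he] := He _ eE.
by move: ce; rewrite (cardsD1 h e) he => -[].
Qed.

Lemma card_ejh n m d (E : {set {set 'I_n}}) (h : 'I_n) e j :
  is_hyperstar m.+3 d E h -> e \in E -> j \in e -> j != h -> #|e :\ j :\ h| = m.+1.
Proof.
move=> H eE je jh; case: (H) => _ He _ _; have [ce he] := He _ eE.
move: ce; rewrite (cardsD1 j e) je (cardsD1 h (e :\ j)) !inE he eq_sym jh /=.
by case.
Qed.


Lemma star_in (R : pzRingType) n m d (E : {set {set 'I_n}}) (h : 'I_n) (S : {set {set 'I_n}}) e s (lam : R) :
  is_hyperstar m.+3 d E h -> S \subset E -> e \in E -> s \in e -> s != h ->
  star_vec h S lam s = if e \in S then 1 else 0.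
Proof.
move=> H sSE eE se sh; rewrite /star_vec (negbTE sh).
have -> : [exists e' in S, s \in e'] = (e \in S); last by [].
apply/existsP/idP => [[e' /andP[e'S se']]|eS]; last by exists e; rewrite eS.
by rewrite -(edge_uniq H sh (subsetP sSE _ e'S) eE se' se).
Qed.

Lemma A_nonheart (R : comPzRingType) n m d (E : {set {set 'I_n}}) (h : 'I_n) (S : {set {set 'I_n}}) (c lam : R) j :
  is_hyperstar m.+3 d E h -> S \subset E -> j != h ->
  lap_apply m.+3 E (fun i => c * star_vec h S lam i) j
    = lam * (c * star_vec h S lam j) ^+ m.+2.
Proof.
move=> H sSE jh; case: (H) => _ He _ Hc.
have [e eE je] := Hc j; have he := (He _ eE).2.
rewrite (lap_nonheart _ _ H jh eE je) (prod_split _ _ je he jh).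
rewrite (eq_bigr (fun _ => c * if e \in S then 1 else 0)); last first.
  move=> s; rewrite !inE => /andP[sh /andP[_ se]].
  by rewrite (star_in _ _ H sSE eE se sh).
rewrite prodr_const (card_ejh H eE je jh) (star_in _ _ H sSE eE je jh).
rewrite /star_vec eqxx.
case: (e \in S); last by rewrite !mulr0 !expr0n /= !mulr0 subr0.
rewrite !mulr1 exprS; ring.
Qed.

Lemma A_heart (R : comPzRingType) n m d (E : {set {set 'I_n}}) (h : 'I_n) (S : {set {set 'I_n}}) (c lam : R) :
  is_hyperstar m.+3 d E h -> S \subset E ->
  lap_apply m.+3 E (fun i => c * star_vec h S lam i) h
   - lam * (c * star_vec h S lam h) ^+ m.+2 = - (c ^+ m.+2 * fr m.+3 d #|S| lam).
Proof.
move=> H sSE; rewrite (lap_heart _ _ H).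
rewrite (eq_bigr (fun e => if e \in S then c ^+ m.+2 else 0)); last first.
  move=> e eE.
  rewrite (eq_bigr (fun _ => c * if e \in S then 1 else 0)); last first.
    move=> s; rewrite !inE => /andP[sh se].
    by rewrite (star_in _ _ H sSE eE se sh).
  rewrite prodr_const (card_eh H eE).
  by case: (e \in S); rewrite ?mulr1 ?mulr0 ?expr0n.
rewrite -big_mkcondr /=.
rewrite (eq_bigl (fun e => e \in S)); last first.
  by move=> e /=; case eS: (e \in S); rewrite ?andbT ?andbF // (subsetP sSE _ eS).
rewrite sumr_const /star_vec eqxx /fr /= -[c ^+ m.+2 *+ _]mulr_natr.
rewrite !exprMn; move: (c ^+ m.+2) ((1 - lam) ^+ m.+2) (#|S|%:R : R) (d%:R : R) => A B C D; ring.
Qed.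


Lemma claim (R : realFieldType) n m d (E : {set {set 'I_n}}) (h : 'I_n) (x : 'I_n -> R) lam e :
  odd m.+3 -> is_hyperstar m.+3 d E h -> lam != 1 ->
  (forall i, lap_apply m.+3 E x i = lam * x i ^+ m.+2) -> e \in E ->
  (forall s, s \in e :\ h -> x s = 0) \/ (forall s, s \in e :\ h -> x s = x h / (1 - lam)).
Proof.
move=> om H l1 Heq eE; case: (H) => _ He _ _; have he := (He _ eE).2.
have l1' : 1 - lam != 0 by rewrite subr_eq0 eq_sym.
have Ps : forall s, s \in e :\ h -> \prod_(t in e | t != s) x t = (1 - lam) * x s ^+ m.+2.
  move=> s; rewrite !inE => /andP[sh se]; have := Heq s.
  rewrite (lap_nonheart _ _ H sh eE se) => E1.
  rewrite mulrBl mul1r -E1; ring.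
case: (boolP [exists s in e :\ h, x s == 0]).
- case/existsP => j0 /andP[j0e /eqP xj0]; left => s se.
  case: (eqVneq s j0) => [->//|sj0].
  have : (1 - lam) * x s ^+ m.+2 = 0.
    rewrite -Ps // (bigD1 j0) /=; first by rewrite xj0 mul0r.
    by move: j0e; rewrite !inE => /andP[_ ->]; rewrite eq_sym sj0.
  move/eqP; rewrite mulf_eq0 (negbTE l1') /= expf_eq0 /=; exact/eqP.
- move/existsPn => nz; right.
  have nzs : forall s, s \in e :\ h -> x s != 0.
    by move=> s se; have := nz s; rewrite se.
  have : (0 < #|e :\ h|)%N by rewrite (card_eh H eE).
  case/card_gt0P => j0 j0e.
  have Q : forall s, s \in e :\ h -> \prod_(t in e) x t = (1 - lam) * x s ^+ m.+3.
    move=> s se; have se' : s \in e by move: se; rewrite inE => /andP[].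
    by rewrite (bigD1 s) //= Ps // exprS mulrCA.
  have eqs : forall s, s \in e :\ h -> x s = x j0.
    move=> s se; apply: (@odd_expr_inj _ m.+3 _ _ om); apply: (mulfI l1'); by rewrite -!Q.
  have xh : x h = (1 - lam) * x j0.
    have := Ps _ j0e; have nj0 := nzs _ j0e.
    move: j0e; rewrite !inE => /andP[j0h j0e'].
    rewrite (prod_split _ _ j0e' he j0h) (eq_bigr (fun _ => x j0)); last first.
      move=> t; rewrite !inE => /andP[th /andP[_ te]]; apply: eqs; by rewrite !inE th te.
    rewrite prodr_const (card_ejh H eE j0e' j0h) [x j0 ^+ m.+2]exprS mulrA.
    by move=> E2; apply: (mulIf (expf_neq0 m.+1 nj0)).
  move=> s se; rewrite (eqs s se) xh [(1 - lam) * _]mulrC mulfK //.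
Qed.


Lemma lemB (R : realFieldType) n m d (E : {set {set 'I_n}}) (h : 'I_n) (x : 'I_n -> R) lam :
  odd m.+3 -> is_hyperstar m.+3 d E h -> lam != 1 -> is_H_eigenpair m.+3 E lam x ->
  exists c, exists S : {set {set 'I_n}},
    [/\ c != 0, S \subset E & x = fun j => c * star_vec h S lam j].
Proof.
move=> om H l1 [[i xi] Heq]; case: (H) => _ He _ Hc.
have l1' : 1 - lam != 0 by rewrite subr_eq0 eq_sym.
pose c := x h / (1 - lam).
pose S := [set e in E | [exists s in e :\ h, x s != 0]].
have sSE : S \subset E by apply/subsetP => e; rewrite inE => /andP[].
have xe : forall j, x j = c * star_vec h S lam j.
  move=> j; case: (eqVneq j h) => [->|jh].
    by rewrite /star_vec eqxx /c divfK.
  have [e eE je] := Hc j.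
  rewrite (star_in _ lam H sSE eE je jh).
  case eS: (e \in S).
  - move: (eS); rewrite inE eE /= => /existsP [s0 /andP[s0e xs0]].
    have jeh : j \in e :\ h by rewrite !inE jh je.
    case: (claim _ x lam om H l1 Heq eE) => Hcl.
      by move: xs0; rewrite Hcl // eqxx.
    by rewrite mulr1 Hcl.
  - move: eS; rewrite inE eE /= => /existsPn /(_ j).
    by rewrite !inE jh je /= => /negPn/eqP ->; rewrite mulr0.
exists c, S; split => //; last exact: functional_extensionality.
by apply/eqP => c0; move: xi; rewrite xe c0 mul0r eqxx.
Qed.

Lemma sub_exists T (E : {set T}) : forall r, (r <= #|E|)%N -> exists2 S : {set T}, S \subset E & #|S| = r.
Proof.
elim=> [|r IH] rE; first by exists set0; [exact: sub0set | exact: cards0].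
have [S sSE cS] := IH (ltnW rE).
have /subsetPn [e eE eS] : ~~ (E \subset S).
  by apply/negP => /subset_leq_card; rewrite cS leqNgt rE.
exists (e |: S); first by rewrite subUset sub1set eE sSE.
by rewrite cardsU1 eS cS.
Qed.

Theorem proposition5p1 (R : realType) (k d n : nat) (E : {set {set 'I_n.+1}}) :
  odd k -> (3 <= k)%N -> (2 <= d)%N -> is_hyperstar k d E ord0 ->
  (forall lam : R, lam != 1 ->
     (is_H_eigenvalue k E lam <-> exists2 r : nat, (r <= d)%N & fr k d r lam = 0))
  /\
  (forall (r : nat) (lam : R), (r <= d)%N -> lam != 1 -> fr k d r lam = 0 ->
     forall x : 'I_n.+1 -> R,
       is_H_eigenpair k E lam x <->
       exists c : R, exists S : {set {set 'I_n.+1}},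
         [/\ c != 0, S \subset E, #|S| = r &
             forall j, x j = c * star_vec ord0 S lam j]).
Proof.
case: k => [|[|[|m]]] // ok _ _ H.
have cE : #|E| = d by case: H.
have key : forall lam : R, lam != 1 -> forall c (S : {set {set 'I_n.+1}}), c != 0 -> S \subset E ->
  (is_H_eigenpair m.+3 E lam (fun i => c * star_vec ord0 S lam i) <-> fr m.+3 d #|S| lam = 0).
  move=> lam l1 c S c0 sSE; split.
  - case=> _ Heq; have := A_heart _ c lam H sSE; rewrite Heq subrr => /esym/eqP.
    by rewrite oppr_eq0 mulf_eq0 expf_eq0 /= (negbTE c0) /= => /eqP.
  - move=> f0; split.
      by exists ord0; rewrite /star_vec eqxx mulf_neq0 // subr_eq0 eq_sym.
    move=> i; case: (eqVneq i ord0) => [->|ih].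
      by apply/eqP; rewrite -subr_eq0 (A_heart _ c lam H sSE) f0 mulr0 oppr0.
    exact: (A_nonheart _ c lam i H sSE ih).
split.
- move=> lam l1; split.
  + case=> x Hx; have [c [S [c0 sSE fx]]] := lemB ok H l1 Hx.
    rewrite fx in Hx; exists #|S|; first by rewrite -cE subset_leq_card.
    by apply/(key _ l1 c S c0 sSE).
  + case=> r rd f0; have rE : (r <= #|E|)%N by rewrite cE.
    have [S sSE cS] := @sub_exists _ E r rE.
    exists (fun i => 1 * star_vec ord0 S lam i).
    by apply/(key _ l1 1 S (oner_neq0 _) sSE); rewrite cS.
- move=> r lam rd l1 f0 x; split.
  + move=> Hx; have [c [S [c0 sSE fx]]] := lemB ok H l1 Hx.
    exists c, S; split => //; last by rewrite fx.
    rewrite fx in Hx; have := (key _ l1 c S c0 sSE).1 Hx => fS.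
    apply/eqP; rewrite -(eqr_nat R); apply/eqP.
    apply: (@addrI _ ((lam - d%:R) * (1 - lam) ^+ m.+2)).
    by move: fS f0; rewrite /fr /= => -> ->.
  + case=> c [S [c0 sSE cS xe]].
    have fx : x = (fun i => c * star_vec ord0 S lam i) by exact: functional_extensionality.
    by rewrite fx; apply/(key _ l1 c S c0 sSE); rewrite cS.
Qed.
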